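(* Let $(R,d)$ be a fusion algebra with set of irreducible objects $I$. For every finite, symmetric ($\bar X=X$), nonempty set $X\subseteq I$ there exists $C_X>0$ such that for every finite set $A\subseteq I$ we have $|\partial_X(A)|\le C_X|\partial^{\mathrm{inn}}_X(A)|$. In particular, if $X$ is moreover generating, then $\mathrm{F\o l}_X(R,d)\le C_X\,\mathrm{F\o l}^{\mathrm{inn}}_X(R,d)$.
   Context: A fusion algebra $(R,d)$ consists of a set $I$ with distinguished $e$ and involution $\alpha\mapsto\bar\alpha$, a unital ring structure on $R=\mathbb{Z}[I]$ with unit $e$ and $\xi\eta=\sum_\alpha N^\alpha_{\xi,\eta}\alpha$, $N^\alpha_{\xi,\eta}\in\mathbb{Z}_{\ge0}$ finitely many nonzero, the involution extending to a $\mathbb{Z}$-linear antimultiplicative involution, Frobenius reciprocity $N^\alpha_{\xi,\eta}=N^\xi_{\alpha,\bar\eta}=N^\eta_{\bar\xi,\alpha}$, and $\mathbb{Z}$-linear multiplicative $d:R\to\mathbb{R}$ with $d(\bar\alpha)=d(\alpha)\ge1$ on $I$. $\mathrm{supp}(r)$: elements of $I$ with nonzero coefficient in $r$. $|A|=\sum_{\alpha\in A}d(\alpha)^2$, $A^c=I\setminus A$. $\partial_X(A)=\{\alpha\in A:\exists x\in X,\ \mathrm{supp}(\alpha x)\not\subseteq A\}\cup\{\alpha\in A^c:\exists x\in X,\ \mathrm{supp}(\alpha x)\not\subseteq A^c\}$, $\partial^{\mathrm{inn}}_X(A)=\{\alpha\in A:\exists x\in X,\ \mathrm{supp}(\alpha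 x)\not\subseteq A\}$. A finite generating set is a finite $X$, $\bar X=X$, such that every $\alpha\in I$ lies in $\mathrm{supp}(x_1\cdots x_n)$ for some $x_i\in X$. $\mathrm{F\o l}_X(R,d)=\inf_A|\partial_XA|/|A|$ and $\mathrm{F\o l}^{\mathrm{inn}}_X(R,d)=\inf_A|\partial^{\mathrm{inn}}_XA|/|A|$ over nonempty finite $A\subseteq I$. *)

(* Defs.v *)
From HB Require Import structures.
From mathcomp Require Import all_boot all_order all_algebra.
From mathcomp Require Import all_classical all_reals all_analysis.
Set Implicit Arguments. Unset Strict Implicit. Unset Printing Implicit Defensive.
Import Order.TTheory GRing.Theory Num.Theory.
Local Open Scope classical_set_scope.
Local Open Scope ring_scope.

(* A fusion algebra on the set of irreducibles I (a choiceType), with unit e,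
   involution bar, structure constants N xi eta alpha = N^alpha_{xi,eta}
   (coefficient of alpha in the product xi*eta), and dimension function d.
   Finite sums over I are the finitely supported sums of fsbigop. *)
Section FusionAlgebra.
Variables (R : realType) (I : choiceType) (e : I) (bar : I -> I)
  (N : I -> I -> I -> nat) (d : I -> R).

(* coefficient of gamma in (r * x), r an element of Z[I] with nat coeffs *)
Definition rmul_basis (r : I -> nat) (x : I) : I -> nat :=
  fun g => \big[addn/0%N]_(b \in [set: I]) (r b * N b x g)%N.

Record is_fusion_algebra : Prop := {
  fa_fin_supp : forall xi eta, finite_set [set a | N xi eta a != 0%N];
  fa_unitl : forall eta a, N e eta a = (a == eta) :> nat;
  fa_unitr : forall xi a, N xi e a = (a == xi) :> nat;
  fa_assoc : forall xi eta zeta a,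
    \big[addn/0%N]_(b \in [set: I]) (N xi eta b * N b zeta a)%N =
    \big[addn/0%N]_(b \in [set: I]) (N eta zeta b * N xi b a)%N;
  fa_invol : forall a, bar (bar a) = a;
  fa_antimult : forall xi eta a, N (bar eta) (bar xi) (bar a) = N xi eta a;
  fa_frob1 : forall xi eta a, N xi eta a = N a (bar eta) xi;
  fa_frob2 : forall xi eta a, N xi eta a = N (bar xi) a eta;
  fa_d_bar : forall a, d (bar a) = d a;
  fa_d_ge1 : forall a, 1 <= d a;
  fa_d_mult : forall xi eta,
    d xi * d eta = \sum_(a \in [set: I]) (N xi eta a)%:R * d a
}.

(* coefficients of the product x_1 x_2 ... x_n in Z[I] *)
Definition word_prod (x : I) (xs : seq I) : I -> nat :=
  foldl rmul_basis (fun a => (a == x) : nat) xs.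

Definition generating (X : set I) : Prop :=
  finite_set X /\ bar @` X = X /\
  forall a, exists x xs, X x /\ all (fun y => `[< X y >]) xs /\
                       word_prod x xs a != 0%N.

Definition weight (A : set I) : \bar R := (\esum_(a in A) ((d a) ^+ 2)%:E)%E.

Definition inner_boundary (X A : set I) : set I :=
  [set a | A a /\ exists x, X x /\ exists b, N a x b != 0%N /\ ~ A b].

Definition boundary (X A : set I) : set I :=
  inner_boundary X A `|`
  [set a | ~ A a /\ exists x, X x /\ exists b, N a x b != 0%N /\ A b].

(* infimum over nonempty finite A of |bd A| / |A| (these weights are finite) *)
Definition folner_const (bd : set I -> set I) : R :=
  inf [set fine (weight (bd A)) / fine (weight A)
      | A in [set A : set I | finite_set A /\ A !=set0]].

Definition Fol (X : set I) : R := folner_const (boundary X).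
Definition Fol_inn (X : set I) : R := folner_const (inner_boundary X).

End FusionAlgebra.

(* Main.v *)
Require Import Defs.
From HB Require Import structures.
From mathcomp Require Import all_boot all_order all_algebra.
From mathcomp Require Import all_classical all_reals all_analysis.
From mathcomp Require Import finmap lra.
Import Order.TTheory GRing.Theory Num.Theory.
Local Open Scope classical_set_scope.
Local Open Scope ring_scope.
Set Implicit Arguments. Unset Strict Implicit.

Lemma weight_fin (R : realType) (I : choiceType) (d : I -> R) (A : set I) :
  finite_set A -> weight d A = (\sum_(a <- fset_set A) d a ^+ 2)%:E.
Proof.
move=> fA; rewrite /weight esum_fset //; last by move=> i _; rewrite lee_fin sqr_ge0.
by rewrite fsbig_finite // sumEFin.
Qed.

Lemma sum_sq_le (R : realType) (T : Type) (s : seq T) (F : T -> R) :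
  (forall i, 0 <= F i) -> \sum_(i <- s) F i ^+ 2 <= (\sum_(i <- s) F i) ^+ 2.
Proof.
move=> F0; elim: s => [|h s IH]; first by rewrite !big_nil expr0n.
rewrite !big_cons sqrrD.
have S0 : 0 <= \sum_(i <- s) F i by apply: sumr_ge0.
have : 0 <= F h * \sum_(i <- s) F i by rewrite mulr_ge0.
rewrite mulr2n; lra.
Qed.

Lemma lee_sum_mem (R : realType) (T : eqType) (s : seq T) (F : T -> \bar R) x :
  (forall i, (0 <= F i)%E) -> x \in s -> (F x <= \sum_(i <- s) F i)%E.
Proof.
move=> F0; elim: s => // h s IH; rewrite inE big_cons => /orP [/eqP -> | xs].
  by rewrite leeDl // sume_ge0.
by apply: le_trans (IH xs) _; rewrite leeDr.
Qed.

Lemma supp_fin (R : realType) (I : choiceType) (e : I) (bar : I -> I)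
  (N : I -> I -> I -> nat) (d : I -> R) (HFA : is_fusion_algebra e bar N d) b y :
  finite_set [set a | N b y a != 0%N].
Proof. exact: fa_fin_supp HFA b y. Qed.

Lemma dmult_seq (R : realType) (I : choiceType) (e : I) (bar : I -> I)
  (N : I -> I -> I -> nat) (d : I -> R) (HFA : is_fusion_algebra e bar N d) b y :
  d b * d y = \sum_(a <- fset_set [set a | N b y a != 0%N]) (N b y a)%:R * d a.
Proof.
rewrite (fa_d_mult HFA) -(fsbig_widen [set a | N b y a != 0%N]) //.
  by rewrite fsbig_finite //; exact: supp_fin HFA b y.
move=> a [_ /= /negP]; rewrite negbK => /eqP ->; by rewrite mul0r.
Qed.

Lemma supp_bound (R : realType) (I : choiceType) (e : I) (bar : I -> I)
  (N : I -> I -> I -> nat) (d : I -> R) (HFA : is_fusion_algebra e bar N d) b y :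
  \sum_(a <- fset_set [set a | N b y a != 0%N]) d a ^+ 2 <= (d b * d y) ^+ 2.
Proof.
have d0 : forall a, 0 <= d a by move=> a; exact: le_trans ler01 (fa_d_ge1 HFA a).
apply: le_trans (sum_sq_le _ d0) _.
have S0 : 0 <= \sum_(a <- fset_set [set a | N b y a != 0%N]) d a by apply: sumr_ge0.
have le1 : \sum_(a <- fset_set [set a | N b y a != 0%N]) d a <= d b * d y.
  rewrite (dmult_seq HFA) big_seq [X in _ <= X]big_seq; apply: ler_sum => a.
  rewrite in_fset_set; last exact: supp_fin HFA b y.
  by move=> /set_mem Ha; rewrite ler_peMl // ler1n lt0n.
by rewrite !expr2 ler_pM.
Qed.

Definition fterm (R : realType) (I : choiceType) (N : I -> I -> I -> nat) (d : I -> R)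
  b y a : \bar R := if N b y a != 0%N then (d a ^+ 2)%:E else 0%E.

Lemma fterm_ge0 (R : realType) (I : choiceType) (N : I -> I -> I -> nat) (d : I -> R) b y a :
  (0 <= fterm N d b y a)%E.
Proof. by rewrite /fterm; case: ifP => _ //; rewrite lee_fin sqr_ge0. Qed.

Lemma esum_fterm (R : realType) (I : choiceType) (e : I) (bar : I -> I)
  (N : I -> I -> I -> nat) (d : I -> R) (HFA : is_fusion_algebra e bar N d)
  (O : set I) b y :
  (\esum_(a in O) fterm N d b y a <= ((d b * d y) ^+ 2)%:E)%E.
Proof.
rewrite esum_mkcond.
apply: (@le_trans _ _ (\esum_(a in [set: I]) fterm N d b y a)).
  by apply: le_esum => a _; case: ifP => _; [exact: lexx | exact: fterm_ge0].
rewrite (_ : \esum_(a in [set: I]) fterm N d b y a = weight d [set a | N b y a != 0%N]).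
  rewrite weight_fin ?lee_fin; [exact: supp_bound HFA b y | exact: supp_fin HFA b y].
rewrite /weight [RHS]esum_mkcond; apply: eq_esum => a _; rewrite /fterm.
case: (boolP (N b y a != 0%N)) => h.
  by rewrite (mem_set (h : [set a | N b y a != 0%N] a)).
by rewrite memNset //; exact/negP.
Qed.

Lemma main_ineq (R : realType) (I : choiceType) (e : I) (bar : I -> I)
  (N : I -> I -> I -> nat) (d : I -> R)
  (HFA : is_fusion_algebra e bar N d)
  (X : set I) (HXfin : finite_set X) (HXsym : bar @` X = X) (A : set I) :
  finite_set A ->
  (weight d (boundary N X A) <=
     (1 + \sum_(y <- fset_set X) d y ^+ 2)%:E * weight d (inner_boundary N X A))%E.
Proof.
move=> finA.
set K := \sum_(y <- fset_set X) d y ^+ 2.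
have BA : inner_boundary N X A `<=` A by move=> a [].
have finB : finite_set (inner_boundary N X A) := sub_finite_set BA finA.
have sq0 : forall a, (0 <= (d a ^+ 2)%:E)%E by move=> a; rewrite lee_fin sqr_ge0.
set O := [set a | ~ A a /\ exists x, X x /\ exists b, N a x b != 0%N /\ A b].
have -> : weight d (boundary N X A) =
    (weight d (inner_boundary N X A) + \esum_(a in O) (d a ^+ 2)%:E)%E.
  rewrite /weight /boundary (esumID A); last by move=> i _; exact: sq0.
  congr (_ + _)%E; congr esum; apply/seteqP; split => a /=.
  - by move=> [[Ba|[nAa _]] Aa].
  - by move=> Ba; split; [left | exact: BA].
  - by move=> [[Ba|Oa] nAa] //; exfalso; apply: nAa; exact: BA.
  - by move=> Oa; split; [right | case: Oa].
have step2 : (\esum_(a in O) (d a ^+ 2)%:E <= \esum_(a in O)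
     \sum_(b <- fset_set (inner_boundary N X A)) \sum_(y <- fset_set X) fterm N d b y a)%E.
  apply: le_esum => a [nAa [x [Xx [b [Nab Ab]]]]].
  have Xbx : X (bar x) by rewrite -HXsym; exists x.
  have Bb : inner_boundary N X A b.
    split => //; exists (bar x); split => //; exists a; split => //.
    by rewrite -(fa_frob1 HFA).
  have -> : (d a ^+ 2)%:E = fterm N d b (bar x) a by rewrite /fterm -(fa_frob1 HFA) Nab.
  apply: (@le_trans _ _ (\sum_(y <- fset_set X) fterm N d b y a)).
    apply: (lee_sum_mem (F := fun y => fterm N d b y a)); first by move=> ?; exact: fterm_ge0.
    by rewrite in_fset_set // mem_set.
  apply: (lee_sum_mem (F := fun b => \sum_(y <- fset_set X) fterm N d b y a)).
    by move=> ?; apply: sume_ge0 => *; exact: fterm_ge0.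
  by rewrite in_fset_set // mem_set.
have step3 : (\esum_(a in O)
     \sum_(b <- fset_set (inner_boundary N X A)) \sum_(y <- fset_set X) fterm N d b y a =
   \sum_(b <- fset_set (inner_boundary N X A)) \sum_(y <- fset_set X)
      \esum_(a in O) fterm N d b y a)%E.
  rewrite esum_sum; last by move=> *; apply: sume_ge0 => *; exact: fterm_ge0.
  apply: eq_bigr => b _; rewrite esum_sum //; by move=> *; exact: fterm_ge0.
have step4 : (\sum_(b <- fset_set (inner_boundary N X A)) \sum_(y <- fset_set X)
      \esum_(a in O) fterm N d b y a <=
   ((\sum_(b <- fset_set (inner_boundary N X A)) d b ^+ 2) * K)%:E)%E.
  rewrite mulr_suml -sumEFin; apply: lee_sum => b _.
  rewrite /K mulr_sumr -sumEFin; apply: lee_sum => y _.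
  by rewrite -exprMn; exact: esum_fterm HFA O b y.
have H := le_trans step2 (eq_ind_r (fun z => (z <= _)%E) step4 step3).
rewrite weight_fin //; apply: le_trans (leeD2l _ H) _.
rewrite -EFinD -EFinM lee_fin; lra.
Qed.

Unset Implicit Arguments.

Theorem proposition3p3 (R : realType) (I : choiceType) (e : I) (bar : I -> I)
  (N : I -> I -> I -> nat) (d : I -> R)
  (HFA : is_fusion_algebra e bar N d)
  (X : set I) (HXfin : finite_set X) (HXsym : bar @` X = X) (HXne : X !=set0) :
  exists C : R, 0 < C /\
    (forall A : set I, finite_set A ->
       (weight d (boundary N X A) <= C%:E * weight d (inner_boundary N X A))%E) /\
    (generating bar N X -> Fol N d X <= C * Fol_inn N d X).
Proof.
set K := \sum_(y <- fset_set X) d y ^+ 2.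
have K0 : 0 <= K by apply: sumr_ge0 => y _; exact: sqr_ge0.
have C0 : 0 < 1 + K by lra.
exists (1 + K); split; first exact: C0.
split.
  move=> A fA. have := main_ineq HFA HXfin HXsym fA. exact.
move=> _.
have ratio : forall A, finite_set A ->
  fine (weight d (boundary N X A)) / fine (weight d A) <=
  (1 + K) * (fine (weight d (inner_boundary N X A)) / fine (weight d A)).
  move=> A fA.
  have fB : finite_set (inner_boundary N X A).
    by apply: sub_finite_set fA => a [].
  have H := main_ineq HFA HXfin HXsym fA.
  have wb0 : (0 <= weight d (boundary N X A))%E.
    by apply: esum_ge0 => a _; rewrite lee_fin sqr_ge0.
  move: H wb0; rewrite (weight_fin d fB) (weight_fin d fA) -EFinM => H wb0.
  have fin : weight d (boundary N X A) \is a fin_num.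
    by rewrite ge0_fin_numE // (le_lt_trans H) // ltry.
  move: H; rewrite -(fineK fin) lee_fin => H'.
  rewrite mulrA; apply: ler_wpM2r => //; rewrite invr_ge0 /=.
  by apply: sumr_ge0 => a _; exact: sqr_ge0.
have wpos : forall bd A, 0 <= fine (weight d (bd A)) / fine (weight d A).
  move=> bd A; apply: divr_ge0; apply: fine_ge0; apply: esum_ge0 => a _;
    by rewrite lee_fin sqr_ge0.
rewrite /Fol /Fol_inn /folner_const.
set S := [set A : set I | finite_set A /\ A !=set0].
set L := [set _ | A in S].
set Rs := [set _ | A in S].
have hL : has_lbound L by exists 0 => _ [A _ <-]; exact: (wpos (boundary N X)).
have RsN : Rs !=set0.
  exists (fine (weight d (inner_boundary N X [set e])) / fine (weight d [set e])).
  by exists [set e] => //; split; [exact: finite_set1 | exists e].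
suff : inf L / (1 + K) <= inf Rs by rewrite ler_pdivrMr // mulrC.
apply: lb_le_inf => // _ [A [fA nA] <-].
rewrite ler_pdivrMr // mulrC; apply: le_trans (ratio A fA).
by apply: ge_inf => //; exists A.
Qed.
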